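(* Let $W$ be a workload matrix and $A$ a strategy matrix with the same number of columns, with $W=WA^+A$ (i.e. every row of $W$ lies in the row space of $A$). Let $C$ be any matrix with the same number of columns and let $\tilde A=\begin{bmatrix}A\\ C\end{bmatrix}$. Then $\|W\tilde A^+\|_F\le\|WA^+\|_F$.
   Context: $M^+$ denotes the Moore–Penrose pseudo-inverse of $M$ and $\|\cdot\|_F$ the Frobenius norm. In the matrix-mechanism framework a strategy $A$ for a workload $W$ is one from which $W$ can be answered, i.e. $W=WA^+A$. *)

(* Defs.v *)
From HB Require Import structures.
From mathcomp Require Import all_boot all_order all_algebra.
From Stdlib Require Import ClassicalEpsilon.
Set Implicit Arguments. Unset Strict Implicit. Unset Printing Implicit Defensive.
Import Order.TTheory GRing.Theory Num.Theory.
Local Open Scope ring_scope.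

(* The four Penrose conditions characterizing the Moore-Penrose
   pseudo-inverse X of A (real case: adjoint = transpose). *)
Definition penrose (R : rcfType) (m n : nat) (A : 'M[R]_(m, n)) (X : 'M[R]_(n, m)) : Prop :=
  [/\ A *m X *m A = A,
      X *m A *m X = X,
      (A *m X)^T = A *m X
    & (X *m A)^T = X *m A].

(* The Moore-Penrose pseudo-inverse: the (unique, and always existing)
   matrix satisfying the Penrose conditions. *)
Definition pinv (R : rcfType) (m n : nat) (A : 'M[R]_(m, n)) : 'M[R]_(n, m) :=
  epsilon (inhabits 0) (penrose A).

Definition frob (R : rcfType) (m n : nat) (M : 'M[R]_(m, n)) : R :=
  Num.sqrt (\sum_(i < m) \sum_(j < n) M i j ^+ 2).

(* Main.v *)
Require Import Defs.
From mathcomp Require Import all_boot all_order all_algebra.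
From Stdlib Require Import ClassicalEpsilon.
Set Implicit Arguments. Unset Strict Implicit. Unset Printing Implicit Defensive.
Import Order.TTheory GRing.Theory Num.Theory.
Local Open Scope ring_scope.

Section Aux.
Variable R : rcfType.

Lemma gram_diag m n (M : 'M[R]_(m, n)) i :
  (M *m M^T) i i = \sum_(j < n) M i j ^+ 2.
Proof. by rewrite !mxE; apply: eq_bigr => j _; rewrite mxE expr2. Qed.

Lemma tr_gram m n (M : 'M[R]_(m, n)) :
  \tr (M *m M^T) = \sum_(i < m) \sum_(j < n) M i j ^+ 2.
Proof. by rewrite /mxtrace; apply: eq_bigr => i _; rewrite gram_diag. Qed.

Lemma tr_gram_ge0 m n (M : 'M[R]_(m, n)) : 0 <= \tr (M *m M^T).
Proof.
rewrite tr_gram; apply: sumr_ge0 => i _; apply: sumr_ge0 => j _.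
exact: sqr_ge0.
Qed.

Lemma gram_eq0 m n (M : 'M[R]_(m, n)) : M *m M^T = 0 -> M = 0.
Proof.
move=> H; apply/matrixP => i j; rewrite mxE.
have := gram_diag M i; rewrite H mxE => /esym/eqP.
rewrite psumr_eq0; last by move=> l _; exact: sqr_ge0.
by move=> /allP /(_ j (mem_index_enum _)) /=; rewrite sqrf_eq0 => /eqP.
Qed.

Lemma unit_gram r n (M : 'M[R]_(r, n)) : row_free M -> M *m M^T \in unitmx.
Proof.
move=> fM; rewrite -row_free_unit; suff: kermx (M *m M^T) == 0 by rewrite kermx_eq0.
apply/eqP; set K := kermx _.
have HK : K *m (M *m M^T) = 0 by exact: mulmx_ker.
have KM : K *m M = 0.
  apply: gram_eq0; rewrite trmx_mul mulmxA -(mulmxA K) HK mul0mx //.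
have : (K <= kermx M)%MS by rewrite sub_kermx KM.
have /eqP -> : kermx M == 0 by rewrite kermx_eq0.
by rewrite submx0 => /eqP.
Qed.

Lemma pen_fact m r n (F : 'M[R]_(m, r)) (G : 'M[R]_(r, n)) :
  row_free G -> row_free F^T -> exists X, penrose (F *m G) X.
Proof.
move=> fG fFt.
have uG := unit_gram fG.
have uF := unit_gram fFt. rewrite trmxK in uF.
set SG := G *m G^T in uG *; set SF := F^T *m F in uF *.
have sSG : SG^T = SG by rewrite /SG trmx_mul trmxK.
have sSF : SF^T = SF by rewrite /SF trmx_mul trmxK.
exists (G^T *m invmx SG *m invmx SF *m F^T).
have AX : (F *m G) *m (G^T *m invmx SG *m invmx SF *m F^T) = F *m invmx SF *m F^T.
  by rewrite !mulmxA -(mulmxA F G) -/SG mulmxK.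
have XA : (G^T *m invmx SG *m invmx SF *m F^T) *m (F *m G) = G^T *m invmx SG *m G.
  rewrite !mulmxA -(mulmxA _ F^T F) -/SF mulmxKV //.
split.
- by rewrite AX !mulmxA -(mulmxA _ F^T F) -/SF mulmxKV.
- rewrite XA !mulmxA -(mulmxA _ G G^T) -/SG mulmxKV //.
- by rewrite AX !trmx_mul trmxK trmx_inv sSF mulmxA.
- by rewrite XA !trmx_mul trmxK trmx_inv sSG mulmxA.
Qed.

Lemma pinv_exists m n (A : 'M[R]_(m, n)) : exists X, penrose A X.
Proof.
rewrite -(mulmx_base A); apply: pen_fact; first exact: row_base_free.
by rewrite /row_free mxrank_tr; exact: col_base_full.
Qed.

Lemma penrose_pinv m n (A : 'M[R]_(m, n)) : penrose A (pinv A).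
Proof.
rewrite /pinv; apply: epsilon_spec; exact: pinv_exists.
Qed.

Lemma frob_tr m n (M : 'M[R]_(m, n)) : frob M = Num.sqrt (\tr (M *m M^T)).
Proof. by rewrite /frob tr_gram. Qed.

End Aux.

Theorem mainTheorem7 (R : rcfType) (k m p n : nat)
    (W : 'M[R]_(k, n)) (A : 'M[R]_(m, n)) (C : 'M[R]_(p, n)) :
  W = W *m pinv A *m A ->
  frob (W *m pinv (col_mx A C)) <= frob (W *m pinv A).
Proof.
move=> HW.
set X := W *m pinv A.
set At := col_mx A C.
have [P1 _ P3 _] := penrose_pinv At.
set Y : 'M[R]_(k, m + p) := row_mx X 0.
have YA : Y *m At = W by rewrite /Y /At mul_row_col mul0mx addr0.
set P := At *m pinv At.
have PP : P *m P = P by rewrite /P mulmxA P1.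
have WE : W *m pinv At = Y *m P by rewrite /P mulmxA YA.
have YE : Y *m Y^T = X *m X^T.
  by rewrite /Y tr_row_mx mul_row_col mul0mx addr0.
set Z := Y *m (1%:M - P).
have YD : Y = Y *m P + Z by rewrite /Z mulmxBr mulmx1 addrC subrK.
have cross : (Y *m P) *m Z^T = 0.
  rewrite /Z trmx_mul linearB /= trmx1 P3 -/P mulmxA -(mulmxA Y P).
  by rewrite mulmxBr mulmx1 PP subrr mulmx0 mul0mx.
have cross2 : Z *m (Y *m P)^T = 0 by rewrite -(trmxK Z) -trmx_mul cross trmx0.
rewrite !frob_tr WE -YE.
rewrite ler_sqrt; last exact: tr_gram_ge0.
rewrite {3 4}YD linearD /= mulmxDl !mulmxDr cross cross2 addr0 add0r mxtraceD.
by rewrite lerDl tr_gram_ge0.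
Qed.
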